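(* Let $V:\mathcal{H}_L\otimes\mathcal{H}_J\to\mathcal{H}_p$ be the encoding isometry of a subsystem code on a physical system consisting of a collection of subsystems, and let $R$ be a correctable region. Then every dressed-CSP operator $A$ supported on $R$ implements a logical operation of the form $\mathrm{Id}_L\otimes A_J$ for some $A_J\in\mathcal{B}(\mathcal{H}_J)$.
   Context: $\Pi=VV^\dagger$. An operator $A$ on $\mathcal{H}_p$ is codespace-preserving (CSP) if $[A,\Pi]=0$; dressed-CSP if moreover $V^\dagger AV=A_L\otimes A_J$ for some $A_L\in\mathcal{B}(\mathcal{H}_L)$, $A_J\in\mathcal{B}(\mathcal{H}_J)$ (then $A$ implements $A_L\otimes A_J$); bare-CSP if moreover $A_J=\mathrm{Id}_J$. A region $R$ is a set of physical subsystems; $A$ is supported on $R$ if $A=A_R\otimes\mathrm{Id}_{R^c}$. $R$ is correctable if for every $A_L\in\mathcal{B}(\mathcal{H}_L)$ there is a bare-CSP operator supported on $R^c$ implementing $A_L\otimes\mathrm{Id}_J$. *)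

(* Defs.v *)
(* Operators between
   finite-dimensional spaces with chosen bases I, J are represented by
   their matrix coefficients [mat I J := I -> J -> C] (row index I). *)
From HB Require Import structures.
From mathcomp Require Import all_boot all_order all_algebra.
Set Implicit Arguments. Unset Strict Implicit. Unset Printing Implicit Defensive.
Import Order.TTheory GRing.Theory Num.Theory.
Local Open Scope ring_scope.

Section Ops.
Variable C : numClosedFieldType.

Definition mat (I J : finType) := I -> J -> C.

Definition mmul (I J K : finType) (A : mat I J) (B : mat J K) : mat I K :=
  fun i k => \sum_(j : J) A i j * B j k.

Definition madj (I J : finType) (A : mat I J) : mat J I :=
  fun j i => (A i j)^*.

Definition mid (I : finType) : mat I I := fun i j => (i == j)%:R.

Definition meq (I J : finType) (A B : mat I J) : Prop :=
  forall i j, A i j = B i j.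

(* tensor product: basis of H_L (x) H_J is the product of bases *)
Definition mtens (I I' J J' : finType) (A : mat I I') (B : mat J J')
  : mat (I * J)%type (I' * J')%type :=
  fun p q => A p.1 q.1 * B p.2 q.2.

End Ops.
Arguments mid C I _ _ : clear implicits.

Section Code.
Variable C : numClosedFieldType.
(* physical system: n subsystems, subsystem i has dimension d i;
   basis of H_p = product basis, indexed by configurations *)
Variables (n : nat) (d : 'I_n -> nat).
Definition phys : finType := {dffun forall i : 'I_n, 'I_(d i)}.
Variables (dL dJ : nat).
Definition logi : finType := ('I_dL * 'I_dJ)%type.

Definition is_isometry (V : mat C phys logi) : Prop :=
  meq (mmul (madj V) V) (mid C logi).

Definition proj (V : mat C phys logi) : mat C phys phys := mmul V (madj V).

Definition CSP (V : mat C phys logi) (A : mat C phys phys) : Prop :=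
  meq (mmul A (proj V)) (mmul (proj V) A).

Definition implements (V : mat C phys logi) (A : mat C phys phys)
  (AL : mat C 'I_dL 'I_dL) (AJ : mat C 'I_dJ 'I_dJ) : Prop :=
  meq (mmul (madj V) (mmul A V)) (mtens AL AJ).

Definition dressed_CSP (V : mat C phys logi) (A : mat C phys phys) : Prop :=
  CSP V A /\ exists AL AJ, implements V A AL AJ.

Definition bare_CSP (V : mat C phys logi) (A : mat C phys phys) : Prop :=
  CSP V A /\ exists AL, implements V A AL (mid C 'I_dJ).

(* A = A_R (x) Id_{R^c}: the matrix coefficient <x|A|y> is
   <x_R|A_R|y_R> * delta(x_{R^c}, y_{R^c}) *)
Definition supported_on (R : {set 'I_n}) (A : mat C phys phys) : Prop :=
  exists AR : mat C phys phys,
    (forall x x' y y' : phys,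
        (forall i, i \in R -> x i = x' i /\ y i = y' i) ->
        AR x y = AR x' y') /\
    (forall x y : phys,
        A x y = if [forall i, (i \notin R) ==> (x i == y i)]
                then AR x y else 0).

Definition correctable (V : mat C phys logi) (R : {set 'I_n}) : Prop :=
  forall AL : mat C 'I_dL 'I_dL,
    exists B : mat C phys phys,
      bare_CSP V B /\ supported_on (~: R) B /\
      implements V B AL (mid C 'I_dJ).

End Code.

(* Main.v *)
Require Import Defs.
From mathcomp Require Import all_boot all_order all_algebra.
From Stdlib Require Import FunctionalExtensionality.
Set Implicit Arguments. Unset Strict Implicit. Unset Printing Implicit Defensive.
Import Order.TTheory GRing.Theory Num.Theory.
Local Open Scope ring_scope.

Section Aux.
Variable C : numClosedFieldType.

Lemma meq_eq (I J : finType) (A B : mat C I J) : meq A B -> A = B.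
Proof. by move=> H; do 2 (apply: functional_extensionality => ?); apply: H. Qed.

Lemma mmulA (I J K L : finType) (A : mat C I J) (B : mat C J K) (D : mat C K L) :
  mmul (mmul A B) D = mmul A (mmul B D).
Proof.
apply: meq_eq => i l; rewrite /mmul.
under eq_bigr do rewrite big_distrl.
rewrite exchange_big; apply: eq_bigr => j _; rewrite big_distrr.
by apply: eq_bigr => k _ /=; rewrite mulrA.
Qed.

Lemma mmul_mid_r (I J : finType) (A : mat C I J) : mmul A (mid C J) = A.
Proof.
apply: meq_eq => i j; rewrite /mmul /mid (bigD1 j) //= eqxx mulr1 big1 ?addr0 //.
by move=> k /negbTE ->; rewrite mulr0.
Qed.

Lemma mmul_mid_l (I J : finType) (A : mat C I J) : mmul (mid C I) A = A.
Proof.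
apply: meq_eq => i j; rewrite /mmul /mid (bigD1 i) //= eqxx mul1r big1 ?addr0 //.
by move=> k; rewrite eq_sym => /negbTE ->; rewrite mul0r.
Qed.

Lemma mtens_mul (I I' I'' J J' J'' : finType) (A1 : mat C I I') (A2 : mat C I' I'')
  (B1 : mat C J J') (B2 : mat C J' J'') :
  mmul (mtens A1 B1) (mtens A2 B2) = mtens (mmul A1 A2) (mmul B1 B2).
Proof.
apply: meq_eq => p q; rewrite /mmul /mtens [RHS]big_distrl /=.
rewrite [RHS](eq_bigr (fun m => \sum_r A1 p.1 m * A2 m q.1 * (B1 p.2 r * B2 r q.2))); last first.
  by move=> m _; rewrite big_distrr.
rewrite pair_bigA; apply: eq_bigr => -[m r] _ /=.
by rewrite mulrACA.
Qed.
End Aux.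

Section Main.
Variable C : numClosedFieldType.
Variables (n : nat) (d : 'I_n -> nat) (dL dJ : nat).

Lemma csp_V (V : mat C (phys d) (logi dL dJ)) (X : mat C (phys d) (phys d)) :
  is_isometry V -> CSP V X -> mmul X V = mmul V (mmul (madj V) (mmul X V)).
Proof.
move=> /meq_eq HV /meq_eq HX.
rewrite -{1}(mmul_mid_r V) -HV -mmulA.
rewrite -mmulA [mmul (mmul X V) _]mmulA.
have -> : mmul X (mmul V (madj V)) = mmul (proj V) X by rewrite -HX.
by rewrite /proj !mmulA.
Qed.

Definition mix (R : {set 'I_n}) (x z : phys d) : phys d :=
  [ffun i => if i \in R then z i else x i].

Lemma supp_comm (R : {set 'I_n}) (A B : mat C (phys d) (phys d)) :
  supported_on R A -> supported_on (~: R) B -> mmul A B = mmul B A.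
Proof.
move=> [AR [HARi HAe]] [BR [HBRi HBe]].
apply: meq_eq => x z; rewrite /mmul.
rewrite (bigD1 (mix R x z)) //= big1 ?addr0; last first.
  move=> y Hy; rewrite HAe HBe.
  case: forallP => H1; last by rewrite mul0r.
  case: forallP => H2; last by rewrite mulr0.
  case/eqP: Hy; apply/ffunP => i; rewrite ffunE.
  case: ifP => iR.
    by have := H2 i; rewrite in_setC iR /= => /eqP.
  by have := H1 i; rewrite iR /= => /eqP.
rewrite (bigD1 (mix R z x)) //= [X in _ = _ + X]big1 ?addr0; last first.
  move=> y Hy; rewrite HAe HBe.
  case: forallP => H1; last by rewrite mul0r.
  case: forallP => H2; last by rewrite mulr0.
  case/eqP: Hy; apply/ffunP => i; rewrite ffunE.
  case: ifP => iR.
    by have := H1 i; rewrite in_setC iR /= => /eqP.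
  by have := H2 i; rewrite iR /= => /eqP.
rewrite HAe HBe HAe HBe.
have -> : [forall i, (i \notin R) ==> (x i == mix R x z i)].
  by apply/forallP => i; apply/implyP => /negbTE iR; rewrite ffunE iR.
have -> : [forall i, (i \notin ~: R) ==> (mix R x z i == z i)].
  by apply/forallP => i; rewrite in_setC negbK; apply/implyP => iR; rewrite ffunE iR.
have -> : [forall i, (i \notin ~: R) ==> (x i == mix R z x i)].
  by apply/forallP => i; rewrite in_setC negbK; apply/implyP => iR; rewrite ffunE iR.
have -> : [forall i, (i \notin R) ==> (mix R z x i == z i)].
  by apply/forallP => i; apply/implyP => /negbTE iR; rewrite ffunE iR.
rewrite mulrC; congr (_ * _).
  by apply: HBRi => i; rewrite in_setC => /negbTE iR; rewrite !ffunE iR.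
by apply: HARi => i iR; rewrite !ffunE iR.
Qed.

End Main.

Theorem lemma2 (C : numClosedFieldType) (n : nat) (d : 'I_n -> nat)
  (dL dJ : nat) (V : mat C (phys d) (logi dL dJ))
  (HV : is_isometry V) (R : {set 'I_n}) (HR : correctable V R)
  (A : mat C (phys d) (phys d))
  (HA : dressed_CSP V A) (HAR : supported_on R A) :
  exists AJ : mat C 'I_dJ 'I_dJ, implements V A (mid C 'I_dL) AJ.
Proof.
case: HA => HAc [AL [AJ /meq_eq HAi]].
case: (pickP (fun _ : 'I_dL => true)) => [i0 _ | H0]; last first.
  by exists (fun _ _ => 0); rewrite /implements /meq => -[i j]; have := H0 i.
exists (fun j l => AL i0 i0 * AJ j l); rewrite /implements /meq => -[i j] [k l].
rewrite HAi /mtens /mid /=.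
pose BL : mat C 'I_dL 'I_dL := fun m k' => ((m == k) && (k' == i0))%:R.
have [B [[HBc [BL' /meq_eq HBi]] [HBs HBi2]]] := HR BL.
move/meq_eq: HBi2 => HBi2.
have HAB := supp_comm HAR HBs.
have E1 : mmul (madj V) (mmul (mmul A B) V) = mmul (mtens AL AJ) (mtens BL (mid C _)).
  rewrite mmulA (csp_V HV HBc) HBi2 -(mmulA A) -mmulA HAi //.
have E2 : mmul (madj V) (mmul (mmul B A) V) = mmul (mtens BL (mid C _)) (mtens AL AJ).
  rewrite mmulA (csp_V HV HAc) HAi -(mmulA B) -mmulA HBi2 //.
rewrite HAB E2 !mtens_mul mmul_mid_r mmul_mid_l in E1.
have := congr1 (fun M => M (i, j) (i0, l)) E1.
rewrite /mtens /mmul /BL /=.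
rewrite (bigD1 i0) //= big1 ?addr0; last first.
  by move=> m /negbTE ->; rewrite andbF mul0r.
rewrite [X in _ = X * _ -> _](bigD1 k) //= big1 ?addr0; last first.
  by move=> m /negbTE ->; rewrite mulr0.
rewrite !eqxx andbT mulr1 => <-.
by rewrite mulrA.
Qed.
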